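(* Let $\varrho:\mathcal{Z}\to\mathbb{R}\cup\{+\infty\}$ be a coherent risk measure with preference to small outcomes that satisfies property T: $\varrho[X+\alpha e^i]=\varrho[X]+\alpha$ for all $X\in\mathcal{Z}$, $\alpha\in\mathbb{R}$, $i=1,\dots,m$. Then $\varrho$ is linear on constant vectors, i.e. the map $\mathbb{R}^m\ni a\mapsto\varrho[a]$ (with $a$ viewed as a constant random vector) is linear.
   Context: $(\Omega,\mathcal{F},P)$ is a probability space, $m\ge1$, $p\in[1,\infty)$, $\mathcal{Z}=\mathcal{L}_p(\Omega,\mathcal{F},P;\mathbb{R}^m)$ with norm topology. $e^i\in\mathbb{R}^m$ is the $i$-th unit vector and $\mathbb{I}$ the constant random vector with all components $1$. A coherent risk measure with preference to small outcomes is a lower semicontinuous functional $\varrho:\mathcal{Z}\to\mathbb{R}\cup\{+\infty\}$ with nonempty domain satisfying: (A1) convexity; (A2) $X_i\ge Y_i$ a.s. for all $i$ implies $\varrho[X]\ge\varrho[Y]$; (A3) $\varrho[tX]=t\varrho[X]$ for $t>0$; (A4) $\varrho[X+a\mathbb{I}]=\varrho[X]+a\varrho[\mathbb{I}]$ for all $X\in\mathcal{Z}$, $a\in\mathbb{R}$. *)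

(* Defs.v *)
From HB Require Import structures.
From mathcomp Require Import all_boot all_order all_algebra.
From mathcomp Require Import all_classical all_reals all_analysis.
Set Implicit Arguments. Unset Strict Implicit. Unset Printing Implicit Defensive.
Import Order.TTheory GRing.Theory Num.Theory.
Import numFieldNormedType.Exports.
Local Open Scope classical_set_scope.
Local Open Scope ring_scope.

Section Zspace.
Context {d : measure_display} {T : measurableType d} {R : realType}.
Variables (P : probability T R) (p : R) (m : nat).

Definition inZ (X : T -> 'rV[R]_m) : Prop :=
  forall i : 'I_m,
    measurable_fun setT (fun w => X w ord0 i) /\
    (Lnorm P p%:E (fun w => (X w ord0 i)%:E) < +oo)%E.

(* L_p distance (with the sup-norm on R^m; all norms on R^m are equivalent) *)
Definition Zdist (X Y : T -> 'rV[R]_m) : \bar R :=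
  Lnorm P p%:E (fun w => (`|X w - Y w|)%:E).

Definition cstZ (a : 'rV[R]_m) : T -> 'rV[R]_m := fun _ => a.

Definition evec (i : 'I_m) : 'rV[R]_m := delta_mx ord0 i.
Definition onesv : 'rV[R]_m := const_mx 1.

Local Open Scope ereal_scope.

Definition coherent_risk_measure (rho : (T -> 'rV[R]_m) -> \bar R) : Prop :=
  (forall X, inZ X -> rho X != -oo) /\
  (exists X, inZ X /\ rho X < +oo) /\
  (forall X (Xs : nat -> T -> 'rV[R]_m), inZ X -> (forall n, inZ (Xs n)) ->
     (fun n => Zdist (Xs n) X) @ \oo --> 0 ->
     rho X <= limn_einf (fun n => rho (Xs n))) /\
  (forall X Y (l : R), inZ X -> inZ Y -> (0 <= l <= 1)%R ->
     rho (fun w => (l *: X w + (1 - l) *: Y w)%R) <=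
     l%:E * rho X + (1 - l)%R%:E * rho Y) /\
  (forall X Y, inZ X -> inZ Y ->
     {ae P, forall w, forall i, (Y w ord0 i <= X w ord0 i)%R} ->
     rho Y <= rho X) /\
  (forall X (t : R), inZ X -> (0 < t)%R -> rho (fun w => (t *: X w)%R) = t%:E * rho X) /\
  (forall X (a : R), inZ X ->
     rho (fun w => (X w + a *: onesv)%R) = rho X + a%:E * rho (cstZ onesv)).

Definition property_T (rho : (T -> 'rV[R]_m) -> \bar R) : Prop :=
  forall X (alpha : R) (i : 'I_m), inZ X ->
    rho (fun w => (X w + alpha *: evec i)%R) = rho X + alpha%:E.

End Zspace.

(* Main.v *)
Require Import Defs.
From HB Require Import structures.
From mathcomp Require Import all_boot all_order all_algebra.
From mathcomp Require Import all_classical all_reals all_analysis.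
From mathcomp Require Import measurable_realfun.
From mathcomp Require Import lra.
Import Order.TTheory GRing.Theory Num.Theory.
Import numFieldNormedType.Exports.
Local Open Scope ring_scope.
Set Warnings "-all".

Lemma mT_powR (d : measure_display) (T : measurableType d) (R : realType)
  (f : T -> R) (q : R) :
  measurable_fun setT f -> measurable_fun setT (fun x => f x `^ q).
Proof. exact: (@measurableT_comp _ _ _ _ _ _ (@powR R ^~ q)). Qed.

Lemma Lnorm_scale (d : measure_display) (T : measurableType d) (R : realType)
  (P : probability T R) (p : R) (hp : 1 <= p) (f : T -> R) (c : R) :
  measurable_fun setT f -> 0 <= c ->
  Lnorm P p%:E (fun w => (c * f w)%:E) = (c%:E * Lnorm P p%:E (fun w => (f w)%:E))%E.
Proof.
move=> mf c0.
have p0 : 0 < p by apply: lt_le_trans hp.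
rewrite unlock /Lnorm.
under eq_integral do rewrite /= normrM powRM ?EFinM //.
rewrite (ger0_norm c0).
have -> : (\int[P]_x `|(f x)%:E| `^ p = \int[P]_x (`|f x| `^ p)%:E)%E.
  by apply: eq_integral => x _.
rewrite ge0_integralZl_EFin //; last 2 first.
- by apply/measurable_EFinP/mT_powR/measurableT_comp.
- by rewrite powR_ge0.
rewrite poweRM ?lee_fin ?powR_ge0 //; last by apply: integral_ge0 => x _; rewrite lee_fin powR_ge0.
by rewrite poweR_EFin -powRrM mulfV ?gt_eqF // powRr1.
Qed.



Lemma rv_norm_eq (R : realType) (m : nat) (v : 'rV[R]_m) :
  `|v| = \big[Num.max/0]_ij `|v ij.1 ij.2|.
Proof. exact: mx_normrE. Qed.

Lemma normpow_le (R : realType) (m : nat) (v : 'rV[R]_m) (p : R) (p0 : 0 < p) :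
  `|v| `^ p <= \sum_i `|v ord0 i| `^ p.
Proof.
have S0 : 0 <= \sum_i `|v ord0 i| `^ p by apply: sumr_ge0 => i _; rewrite powR_ge0.
have -> : `|v| = \big[Num.max/0]_ij `|v ij.1 ij.2| := mx_normrE v.
suff [] : 0 <= \big[Num.max/0]_ij `|v ij.1 ij.2| /\
  (\big[Num.max/0]_ij `|v ij.1 ij.2|) `^ p <= \sum_i `|v ord0 i| `^ p by [].
apply: (big_ind (fun x => 0 <= x /\ x `^ p <= \sum_i `|v ord0 i| `^ p)).
- by split=> //; rewrite powR0 ?gt_eqF.
- by move=> x y [x0 hx] [y0 hy]; rewrite /Order.max; case: ifP.
- move=> [i j] _ /=; rewrite (ord1 i); split=> //.
  rewrite (bigD1 j) //= lerDl; apply: sumr_ge0 => k _; exact: powR_ge0.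
Qed.

Lemma measurable_bigmax (d : measure_display) (T : measurableType d) (R : realType)
  (I : Type) (s : seq I) (F : I -> T -> R) :
  (forall i, measurable_fun setT (F i)) ->
  measurable_fun setT (fun w => \big[Num.max/0]_(i <- s) F i w).
Proof.
move=> mF; elim: s => [|h t ih].
  under eq_fun do rewrite big_nil; exact: measurable_cst.
under eq_fun do rewrite big_cons.
exact: (measurable_maxr (mF h) ih).
Qed.

Lemma measurable_rvnorm (d : measure_display) (T : measurableType d) (R : realType)
  (m : nat) (X : T -> 'rV[R]_m) :
  (forall i, measurable_fun setT (fun w => X w ord0 i)) ->
  measurable_fun setT (fun w => `|X w|).
Proof.
move=> mX.
have -> : (fun w => `|X w|) = (fun w => \big[Num.max/0]_ij `|X w ij.1 ij.2|).
  by apply: funext => w; exact: mx_normrE.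
apply: measurable_bigmax => -[i j] /=; rewrite (ord1 i).
exact: measurableT_comp.
Qed.

Theorem corollary3 (d : measure_display) (T : measurableType d) (R : realType)
  (P : probability T R) (p : R) (m : nat) (hp : 1 <= p) (hm : (1 <= m)%N)
  (rho : (T -> 'rV[R]_m) -> \bar R) :
  coherent_risk_measure P p rho -> property_T P p rho ->
  exists f : 'rV[R]_m -> R,
    (forall (t : R) (a b : 'rV[R]_m), f (t *: a + b) = t * f a + f b) /\
    (forall a : 'rV[R]_m, rho (cstZ a) = (f a)%:E).
Proof.
move=> [rNy [[X0 [X0Z rX0]] [lsc [cvx [mono [hom A4]]]]]] hT.
have p0 : 0 < p by apply: lt_le_trans hp.
have cstZin : forall a : 'rV[R]_m, inZ P p (cstZ a).
  move=> a i; split; first exact: measurable_cst.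
  rewrite unlock /Lnorm; apply: poweR_lty.
  rewrite (_ : (fun x => _) = cst ((`|a ord0 i| `^ p)%:E)) //.
  rewrite integral_cst //.
  by rewrite lte_mul_pinfty ?lee_fin ?powR_ge0 // ltey_eq fin_num_measure.
have [r Er] : exists r, rho X0 = r%:E.
  move: (rNy _ X0Z) rX0; case: (rho X0) => // r _ _; by exists r.
have mX0 : forall i, measurable_fun setT (fun w => X0 w ord0 i) := fun i => (X0Z i).1.
have mnX0 : measurable_fun setT (fun w => `|X0 w|) := @measurable_rvnorm _ _ _ _ X0 mX0.
pose c (n : nat) : R := (n.+1%:R)^-1.
have c0 : forall n, 0 <= c n by move=> n; rewrite /c invr_ge0.
pose Xs n := fun w => c n *: X0 w.
have XsZ : forall n, inZ P p (Xs n).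
  move=> n i; split.
  - rewrite /Xs; under eq_fun do rewrite mxE.
    exact: measurable_funM (measurable_cst _) (mX0 i).
  - rewrite (@eq_Lnorm _ _ _ P p%:E _ (fun w => (c n * X0 w ord0 i)%:E)); last first.
      by move=> w; rewrite /= mxE.
    rewrite (@Lnorm_scale _ _ _ P _ hp _ _ (mX0 i) (c0 n)).
    by rewrite lte_mul_pinfty ?lee_fin // (X0Z i).2.
have LX : (Lnorm P p%:E (fun w => (`|X0 w|)%:E) < +oo)%E.
  rewrite unlock /Lnorm; apply: poweR_lty.
  apply: (@le_lt_trans _ _ (\int[P]_x ((\sum_i `|X0 x ord0 i| `^ p)%:E))%E).
    apply: ge0_le_integral => //.
    - by move=> x _; apply: poweR_ge0.
    - apply/measurable_EFinP => /=.
      under eq_fun do rewrite normr_id.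
      exact: mT_powR.
    - apply/measurable_EFinP; apply: measurable_sum => i.
      by apply: mT_powR; apply: measurableT_comp.
    - by move=> x _; rewrite /= lee_fin normr_id normpow_le.
  under eq_integral do rewrite -sumEFin.
  rewrite (@ge0_integral_sum _ _ _ P setT measurableT _ (fun i x => (`|X0 x ord0 i| `^ p)%:E)); last 2 first.
  - move=> i; apply/measurable_EFinP.
    by apply: mT_powR; apply: measurableT_comp.
  - by move=> i x _; rewrite lee_fin powR_ge0.
  apply: lte_sum_pinfty => i _.
  have := poweR_Lnorm P (fun w => (X0 w ord0 i)%:E) (lt0r_neq0 p0).
  move=> /= <-; apply: poweR_lty; exact: (X0Z i).2.
have [l El] : exists l, Lnorm P p%:E (fun w => (`|X0 w|)%:E) = l%:E.
  move: (Lnorm_ge0 P p%:E (fun w => (`|X0 w|)%:E)) LX.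
  by case: (Lnorm _ _ _) => // l _ _; exists l.
have Zd : forall n, Zdist P p (Xs n) (cstZ 0) = (c n * l)%:E.
  move=> n; rewrite /Zdist.
  rewrite (@eq_Lnorm _ _ _ P p%:E _ (fun w => (c n * `|X0 w|)%:E)); last first.
    by move=> w; rewrite /= /cstZ subr0 normrZ ger0_norm.
  by rewrite (@Lnorm_scale _ _ _ P _ hp _ _ mnX0 (c0 n)) El.
have cvc : forall k : R, ((fun n => (c n * k)%:E) @ \oo --> (0 : \bar R))%classic.
  move=> k; have -> : (0 : \bar R) = (0 * k)%:E by rewrite mul0r.
  apply: cvg_EFin; first exact: nearW.
  rewrite /comp /=; apply: cvgMl; exact: cvg_harmonic.
have rho0le : (rho (cstZ 0) <= 0)%E.
  have := lsc (cstZ 0) Xs (cstZin 0) XsZ.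
  have -> : (fun n => Zdist P p (Xs n) (cstZ 0)) = (fun n => (c n * l)%:E).
    by apply: funext => n; rewrite Zd.
  move=> /(_ (cvc l)).
  have -> : (fun n => rho (Xs n)) = (fun n => (c n * r)%:E).
    by apply: funext => n; rewrite /Xs hom // ?Er ?invr_gt0 //.
  by rewrite is_cvg_limn_einfE; [rewrite (cvg_lim _ (cvc r)) | apply/cvg_ex; exists 0%E; exact: cvc].
have rho0 : rho (cstZ 0) = 0%E.
  have E2 : (fun w : T => 2 *: cstZ (0 : 'rV[R]_m) w) = cstZ 0 :> (T -> 'rV[R]_m).
    by apply: funext => w; rewrite /cstZ scaler0.
  have h2 : rho (cstZ 0) = (2%:E * rho (cstZ 0))%E.
    by rewrite -[in LHS]E2; apply: hom => //; exact: cstZin.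
  move: (rNy _ (cstZin 0)) rho0le h2; case: (rho (cstZ 0)) => // x _ _ /eqP.
  rewrite -EFinM eqe => /eqP hx; congr (_%:E); lra.
have hsum : forall (a : 'rV[R]_m) (s : seq 'I_m),
    rho (cstZ (\sum_(i <- s) a ord0 i *: delta_mx ord0 i)) = (\sum_(i <- s) a ord0 i)%:E.
  move=> a; elim=> [|j s ih]; first by rewrite !big_nil rho0.
  rewrite !big_cons.
  have -> : cstZ (a ord0 j *: delta_mx ord0 j + \sum_(i <- s) a ord0 i *: delta_mx ord0 i)
      = (fun w => cstZ (\sum_(i <- s) a ord0 i *: delta_mx ord0 i) w + a ord0 j *: evec j)
      :> (T -> 'rV[R]_m).
    by apply: funext => w; rewrite /cstZ /evec addrC.
  by rewrite hT ?cstZin // ih -EFinD addrC.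
exists (fun a => \sum_i a ord0 i); split.
- move=> t a b; rewrite mulr_sumr -big_split /=; apply: eq_bigr => i _; by rewrite !mxE.
- move=> a; rewrite {1}(row_sum_delta a); exact: hsum.
Qed.
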